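(* Let $T\colon(B_1,S_1)\to(B_2,S_2)$ be a morphism of $\mathsf{SubS5^S}$. Then $T$ is a morphism of $\mathsf{SubS5^F}$ (i.e.\ $T^\dagger\circ T\subseteq S_1$ and $S_2\subseteq T\circ T^\dagger$) if and only if both of the following hold: (1) for all $a\in B_1$, $a\mathrel{T}0$ implies $a=0$; (2) for all $b_1,b_2\in B_2$ with $b_1\mathrel{S_2}b_2$ there is $a\in B_1$ with $\neg a\mathrel{T}\neg b_1$ and $a\mathrel{T}b_2$.
   Context: A subordination $S\colon A\to B$ between boolean algebras is a relation with (S1) $0\mathrel{S}0$, $1\mathrel{S}1$; (S2) $a,b\mathrel{S}c\Rightarrow(a\vee b)\mathrel{S}c$; (S3) $a\mathrel{S}c,d\Rightarrow a\mathrel{S}(c\wedge d)$; (S4) $a\le b\mathrel{S}c\le d\Rightarrow a\mathrel{S}d$. An $\mathsf{S5}$-subordination on $B$ additionally satisfies (S5) $a\mathrel{S}b\Rightarrow a\le b$; (S6) $a\mathrel{S}b\Rightarrow\neg b\mathrel{S}\neg a$; (S7) $a\mathrel{S}b\Rightarrow\exists c\,(a\mathrel{S}c\mathrel{S}b)$. $\mathsf{SubS5^S}$: objects $(B,S)$ with $S$ an $\mathsf{S5}$-subordination; morphisms $(B,S)\to(B',S')$ subordinations $T$ with $T\circ S=T=S'\circ T$; identity $S$; relational composition ($a\mathrel{(T_2\circ T_1)}c$ iff $\exists b$, $a\mathrel{T_1}b\mathrel{T_2}c$). For $T\colon B_1\to B_2$, $T^\dagger\colon B_2\to B_1$ is given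 by $b\mathrel{T^\dagger}a\iff\neg a\mathrel{T}\neg b$. $\mathsf{SubS5^F}$ is the wide subcategory of $\mathsf{SubS5^S}$ whose morphisms $T\colon(B_1,S_1)\to(B_2,S_2)$ satisfy $T^\dagger\circ T\subseteq S_1$ and $S_2\subseteq T\circ T^\dagger$. *)

(* Defs.v *)
(* boolean algebras are complemented distributive lattices
   with top and bottom, i.e. ctbDistrLatticeType (order.v). *)
From HB Require Import structures.
From mathcomp Require Import all_boot all_order.
Set Implicit Arguments. Unset Strict Implicit. Unset Printing Implicit Defensive.
Import Order.Theory.
Local Open Scope order_scope.

Definition brel (A B : Type) := A -> B -> Prop.

Definition rel_sub (A B : Type) (R R' : brel A B) : Prop :=
  forall a b, R a b -> R' a b.

Definition rel_eq (A B : Type) (R R' : brel A B) : Prop :=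
  forall a b, R a b <-> R' a b.

Definition rcomp (A B C : Type) (T2 : brel B C) (T1 : brel A B) : brel A C :=
  fun a c => exists b, T1 a b /\ T2 b c.

Definition dagger (d1 d2 : Order.disp_t)
  (B1 : ctbDistrLatticeType d1) (B2 : ctbDistrLatticeType d2)
  (T : brel B1 B2) : brel B2 B1 :=
  fun b a => T (~` a) (~` b).

Definition subordination (d1 d2 : Order.disp_t)
  (B1 : ctbDistrLatticeType d1) (B2 : ctbDistrLatticeType d2)
  (S : brel B1 B2) : Prop :=
  [/\ S \bot \bot /\ S \top \top,
      (forall (a b : B1) (c : B2), S a c -> S b c -> S (a `|` b) c),
      (forall (a : B1) (c d : B2), S a c -> S a d -> S a (c `&` d)) &
      (forall (a b : B1) (c d : B2), a <= b -> S b c -> c <= d -> S a d)].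

Definition S5_subordination (d : Order.disp_t) (B : ctbDistrLatticeType d)
  (S : brel B B) : Prop :=
  [/\ subordination S,
      (forall a b : B, S a b -> a <= b),
      (forall a b : B, S a b -> S (~` b) (~` a)) &
      (forall a b : B, S a b -> exists c, S a c /\ S c b)].

Definition SubS5S_morphism (d1 d2 : Order.disp_t)
  (B1 : ctbDistrLatticeType d1) (B2 : ctbDistrLatticeType d2)
  (S1 : brel B1 B1) (S2 : brel B2 B2) (T : brel B1 B2) : Prop :=
  [/\ subordination T, rel_eq (rcomp T S1) T & rel_eq (rcomp S2 T) T].

Definition SubS5F_morphism (d1 d2 : Order.disp_t)
  (B1 : ctbDistrLatticeType d1) (B2 : ctbDistrLatticeType d2)
  (S1 : brel B1 B1) (S2 : brel B2 B2) (T : brel B1 B2) : Prop :=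
  [/\ SubS5S_morphism S1 S2 T,
      rel_sub (rcomp (dagger T) T) S1 &
      rel_sub S2 (rcomp T (dagger T))].

(* Main.v *)
Require Import Defs.
From HB Require Import structures.
From mathcomp Require Import all_boot all_order.
Import Order.Theory.
Local Open Scope order_scope.

Theorem lemma6p5 (d1 d2 : Order.disp_t)
  (B1 : ctbDistrLatticeType d1) (B2 : ctbDistrLatticeType d2)
  (S1 : brel B1 B1) (S2 : brel B2 B2) (T : brel B1 B2) :
  S5_subordination S1 -> S5_subordination S2 ->
  SubS5S_morphism S1 S2 T ->
  (SubS5F_morphism S1 S2 T <->
   ((forall a : B1, T a \bot -> a = \bot) /\
    (forall b1 b2 : B2, S2 b1 b2 ->
       exists a : B1, T (~` a) (~` b1) /\ T a b2))).
Proof.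
move=> [[[S10 S11] S1j S1m S14] S15 S16 S17] _ HM.
have HM' := HM.
case: HM' => [[[T0 T1] Tj Tm T4] HT1 HT2].
split.
- case=> _ Hd Hs; split.
  + move=> a Ha.
    have : S1 a \bot.
      apply: Hd; exists \bot; split => //.
      by rewrite /dagger !compl0.
    by move/S15; rewrite le_eqVlt ltx0 orbF => /eqP.
  + move=> b1 b2 /Hs [a [Ha1 Ha2]]; by exists a.
- case=> H1 H2; split => //.
  + move=> a c [b [Hab Hbc]].
    rewrite /dagger in Hbc.
    case: (proj2 (HT1 a b) Hab) => e [Hae Heb].
    case: (proj2 (HT1 _ _) Hbc) => f [Hcf Hfb].
    have Hef : e `&` f = \bot.
      apply: H1; rewrite -(meetxC b).
      apply: Tm; first exact: (T4 _ e _ _ (leIl _ _) Heb (lexx _)).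
      exact: (T4 _ f _ _ (leIr _ _) Hfb (lexx _)).
    have Hle : e <= ~` f by rewrite -disj_leC Hef.
    have Haf : S1 a (~` f) by exact: (S14 _ _ _ _ (lexx _) Hae Hle).
    have Hfc : S1 (~` f) c by have := S16 _ _ Hcf; rewrite complK.
    exact: (S14 _ _ _ _ (lexx _) Haf (S15 _ _ Hfc)).
Qed.
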